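(* Let $K\ge2$, $\mathcal{M}=\mathcal{L}^K$, and for each $j$ let $\mathcal{A}_j=\{\nu\in\mathcal{M}:c_\pi(\nu_j)<c_\pi(\nu_i)\ \forall i\ne j\}$ and $\mathcal{A}_j^c=\mathcal{M}\setminus\mathcal{A}_j$. Let $\mu\in\mathcal{A}_1$ and $t\in\Sigma_K$. Then \[\inf_{\nu\in\mathcal{A}_1^c}\sum_{a=1}^K t_a\mathrm{KL}(\mu_a,\nu_a)=\min_{j\ne1}\ \inf_{x\le y}\big\{t_1\mathrm{KL}^U_{\inf}(\mu_1,y)+t_j\mathrm{KL}^L_{\inf}(\mu_j,x)\big\},\] and hence $V(\mu):=\sup_{t\in\Sigma_K}\inf_{\nu\in\mathcal{A}_1^c}\sum_a t_a\mathrm{KL}(\mu_a,\nu_a)=\sup_{t\in\Sigma_K}\min_{j\ne1}\inf_{x\le y}\{t_1\mathrm{KL}^U_{\inf}(\mu_1,y)+t_j\mathrm{KL}^L_{\inf}(\mu_j,x)\}$.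
   Context: $\pi\in(0,1)$, $\epsilon>0$, $B>0$. $\mathcal{L}=\{\eta\in\mathcal{P}(\mathbb{R}):\mathbb{E}_\eta|X|^{1+\epsilon}\le B\}$. $F_\eta(x)=\eta((-\infty,x])$, $x_\pi(\eta)=\min\{z:F_\eta(z)\ge\pi\}$, $c_\pi(\eta)=\frac{F_\eta(x_\pi(\eta))-\pi}{1-\pi}x_\pi(\eta)+\frac{1}{1-\pi}\int_{(x_\pi(\eta),\infty)}y\,dF_\eta(y)$. $\Sigma_K$ is the probability simplex in $\mathbb{R}^K$. $\mathrm{KL}(\eta,\kappa)=\int\log\frac{d\eta}{d\kappa}d\eta$ if $\eta\ll\kappa$, else $+\infty$. $\mathrm{KL}^U_{\inf}(\eta,x)=\inf\{\mathrm{KL}(\eta,\kappa):\kappa\in\mathcal{L},c_\pi(\kappa)\ge x\}$, $\mathrm{KL}^L_{\inf}(\eta,x)=\inf\{\mathrm{KL}(\eta,\kappa):\kappa\in\mathcal{L},c_\pi(\kappa)\le x\}$. *)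

(* Defs.v *)
From HB Require Import structures.
From mathcomp Require Import all_boot all_order all_algebra.
From mathcomp Require Import all_classical all_reals all_analysis.
Set Implicit Arguments. Unset Strict Implicit. Unset Printing Implicit Defensive.
Import Order.TTheory GRing.Theory Num.Theory.
Import numFieldNormedType.Exports.
Local Open Scope classical_set_scope.
Local Open Scope ring_scope.

Section defs.
Variable R : realType.

Notation law := (probability R R).

Definition inL (eps B : R) (eta : law) : Prop :=
  (\int[eta]_x (`|x| `^ (1 + eps))%:E <= B%:E)%E.

Definition cdf (eta : law) (x : R) : R := fine (eta [set` `]-oo, x]]).

(* x_pi(eta) = min { z : F_eta(z) >= pi } (the minimum is attained by
   right-continuity of F_eta, so it equals the infimum) *)
Definition quant (pi : R) (eta : law) : R := inf [set z | pi <= cdf eta z].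

Definition cvar (pi : R) (eta : law) : \bar R :=
  let q := quant pi eta in
  (((cdf eta q - pi) / (1 - pi) * q)%:E
   + (1 - pi)^-1%:E * \int[eta]_(y in [set` `]q, +oo[]) y%:E)%E.

Definition KL (eta kappa : law) : \bar R :=
  if pselect (eta `<< kappa) is left _ then
    (\int[eta]_x (ln (fine (Radon_Nikodym (charge_of_finite_measure eta) kappa x)))%:E)%E
  else +oo%E.

Definition KLinfU (pi eps B : R) (eta : law) (x : R) : \bar R :=
  ereal_inf [set KL eta kappa | kappa in [set k | inL eps B k /\ (x%:E <= cvar pi k)%E]].

Definition KLinfL (pi eps B : R) (eta : law) (x : R) : \bar R :=
  ereal_inf [set KL eta kappa | kappa in [set k | inL eps B k /\ (cvar pi k <= x%:E)%E]].

Definition inM (eps B : R) (K : nat) (nu : 'I_K -> law) : Prop :=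
  forall i, inL eps B (nu i).

Definition inA (pi eps B : R) (K : nat) (j : 'I_K) (nu : 'I_K -> law) : Prop :=
  inM eps B nu /\ forall i, i != j -> (cvar pi (nu j) < cvar pi (nu i))%E.

Definition inAc (pi eps B : R) (K : nat) (j : 'I_K) (nu : 'I_K -> law) : Prop :=
  inM eps B nu /\ ~ inA pi eps B j nu.

Definition simplex (K : nat) (t : 'I_K -> R) : Prop :=
  (forall i, 0 <= t i) /\ \sum_(i < K) t i = 1.

(* inf_{nu in A_1^c} sum_a t_a KL(mu_a, nu_a)   (index 1 is ord0) *)
Definition lhs_val (pi eps B : R) (n : nat) (mu : 'I_n.+2 -> law)
    (t : 'I_n.+2 -> R) : \bar R :=
  ereal_inf [set (\sum_(a < n.+2) (t a)%:E * KL (mu a) (nu a))%E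
            | nu in [set nu | inAc pi eps B ord0 nu]].

Definition rhs_val (pi eps B : R) (n : nat) (mu : 'I_n.+2 -> law)
    (t : 'I_n.+2 -> R) : \bar R :=
  (\big[Order.min/+oo]_(j < n.+2 | j != ord0)
     ereal_inf [set ((t ord0)%:E * KLinfU pi eps B (mu ord0) xy.2
                     + (t j)%:E * KLinfL pi eps B (mu j) xy.1)
               | xy in [set xy : R * R | (xy.1 <= xy.2)%R]])%E.

End defs.

(* Main.v *)
Require Import Defs.
From HB Require Import structures.
From mathcomp Require Import all_boot all_order all_algebra.
From mathcomp Require Import all_classical all_reals all_analysis.
From mathcomp Require Import lra ring measurable_realfun.
Import Order.TTheory GRing.Theory Num.Theory.
Local Open Scope classical_set_scope.
Local Open Scope ring_scope.

Section S.
Variable R : realType.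
Implicit Types eta kappa : probability R R.

Lemma ae_transfer eta kappa (P : R -> Prop) : eta `<< kappa ->
  (\forall x \ae kappa, P x) -> (\forall x \ae eta, P x).
Proof.
move=> ek [N [mN kN PN]]; exists N; split => //.
by move/null_content_dominatesP : ek; apply.
Qed.

Lemma ln_ineq (u : R) : 0 <= u ->
  Num.max (ln u) 0 + u^-1 >= u^-1 * u + Num.max (- ln u) 0 /\
  Num.max (- ln u) 0 <= u^-1.
Proof.
rewrite le_eqVlt => /predU1P[<-|u0]; first by rewrite ln0 // invr0 !mul0r oppr0 maxxx !addr0.
have ln1 : - ln u <= u^-1 - 1.
  rewrite -lnV ?posrE //; have := expR_ge1Dx (ln u^-1).
  by rewrite lnK ?posrE ?invr_gt0 // => h; lra.
rewrite mulVf ?gt_eqF //; split.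
- have : 0 < u^-1 by rewrite invr_gt0.
  rewrite /Num.max; do 2 case: ifPn; lra.
- have : 0 < u^-1 by rewrite invr_gt0.
  rewrite /Num.max; case: ifPn; lra.
Qed.

Lemma measurable_inv_nn (g : R -> R) : measurable_fun setT g ->
  (forall x, 0 <= g x) -> measurable_fun setT (fun x => (g x)^-1).
Proof.
move=> mg g0.
have -> : (fun x => (g x)^-1) = fun x => if g x == 0 then 0 else expR (- ln (g x)).
  apply/funext => x; case: ifPn => [/eqP ->|gx]; first by rewrite invr0.
  have gp : 0 < g x by rewrite lt_def gx g0.
  by rewrite -lnV ?posrE // lnK ?posrE ?invr_gt0.
apply: measurable_fun_ifT => //.
- by apply: measurable_fun_eqr.
- apply: measurableT_comp => //; apply: measurableT_comp => //.
  exact: measurableT_comp (@measurable_ln R) mg.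
Qed.

Local Open Scope ereal_scope.
Lemma KL_ge0 eta kappa : 0 <= KL eta kappa.
Proof.
rewrite /KL; case: pselect => [ek|_]; last by rewrite leey.
set fC := Radon_Nikodym _ _.
set f := Radon_Nikodym_SigmaFinite.f eta kappa.
have f0 : forall x, 0 <= f x := Radon_Nikodym_SigmaFinite.f_ge0 ek.
have ffin : forall x, f x \is a fin_num := Radon_Nikodym_SigmaFinite.f_fin_num ek.
have fint : kappa.-integrable setT f := Radon_Nikodym_SigmaFinite.f_integrable ek.
have mf : measurable_fun setT f := measurable_int _ fint.
pose G x := fine (f x).
have fG x : f x = (G x)%:E by rewrite /G fineK.
have G0 x : (0 <= G x)%R by rewrite /G fine_ge0.
have mG : measurable_fun setT G.
  by apply: measurableT_comp => //; exact: fine_measurable.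
have mfC : measurable_fun setT fC.
  by apply: measurable_int; exact: Radon_Nikodym_integrable.
have -> : \int[eta]_x (ln (fine (fC x)))%:E = \int[eta]_x (ln (G x))%:E.
  apply: ae_eq_integral => //.
  - apply/measurable_EFinP; apply: measurableT_comp; first exact: measurable_ln.
    by apply: measurableT_comp => //; exact: fine_measurable.
  - apply/measurable_EFinP; apply: measurableT_comp; [exact: measurable_ln|exact: mG].
  have := ae_eq_Radon_Nikodym_SigmaFinite ek measurableT.
  move/(@ae_transfer eta kappa _ ek); apply: filterS => x h /h hx.
  by rewrite /G /fC /f -hx.
have cov (phi : R -> \bar R) : (forall x, 0 <= phi x) -> measurable_fun setT phi ->
    \int[kappa]_x (phi x * f x) = \int[eta]_x phi x.
  by move=> p0 mp; exact: Radon_Nikodym_SigmaFinite.change_of_variables.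
pose Ginv x := (G x)^-1%R.
have mGi : measurable_fun setT Ginv := @measurable_inv_nn G mG G0.
have Gi0 x : (0 <= Ginv x)%R by rewrite invr_ge0.
have I1 : \int[eta]_x (Ginv x)%:E <= 1.
  rewrite -cov //; last exact/measurable_EFinP.
  apply: (@le_trans _ _ (\int[kappa]_x (cst 1 x))); last first.
    by rewrite integral_cst // mul1e; apply: probability_le1.
  apply: ge0_le_integral => //.
  - by move=> x _; rewrite mule_ge0 // lee_fin.
  - by apply: emeasurable_funM => //; exact/measurable_EFinP.
  - move=> x _; rewrite fG -EFinM lee_fin /Ginv.
    by have [->|gx] := eqVneq (G x) 0%R; [rewrite mulr0 | rewrite mulVf].
have I2 : \int[eta]_x (Ginv x * G x)%:E = 1.
  rewrite -cov //; last 2 first.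
  - by move=> x; rewrite lee_fin mulr_ge0.
  - by apply/measurable_EFinP; exact: measurable_funM.
  transitivity (\int[kappa]_x f x).
    apply: eq_integral => x _; rewrite fG -EFinM /Ginv; congr EFin.
    by have [->|gx] := eqVneq (G x) 0%R; [rewrite !mulr0 | rewrite mulVf // mul1r].
  by rewrite -Radon_Nikodym_SigmaFinite.f_integral //; apply: probability_setT.
have mlG : measurable_fun setT (fun x => ln (G x)).
  exact: measurableT_comp (@measurable_ln R) mG.
have mp : measurable_fun setT (fun x => (Num.max (ln (G x)) 0)%:E).
  by apply/measurable_EFinP; apply: measurable_maxr.
have mn : measurable_fun setT (fun x => (Num.max (- ln (G x)) 0)%:E).
  apply/measurable_EFinP; apply: measurable_maxr => //.
  exact: measurableT_comp mlG.
rewrite integralE.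
have -> : (fun x => (ln (G x))%:E)^\+ = fun x => (Num.max (ln (G x)) 0)%:E.
  by apply/funext => x; rewrite funeposE EFin_max.
have -> : (fun x => (ln (G x))%:E)^\- = fun x => (Num.max (- ln (G x)) 0)%:E.
  by apply/funext => x; rewrite funenegE EFin_max.
set a := \int[eta]_x (Num.max (ln (G x)) 0)%:E.
set b := \int[eta]_x (Num.max (- ln (G x)) 0)%:E.
have b0 : 0 <= b by apply: integral_ge0 => x _; rewrite lee_fin le_max lexx orbT.
have Hb : b <= \int[eta]_x (Ginv x)%:E.
  apply: ge0_le_integral => //.
  - by move=> x _; rewrite lee_fin le_max lexx orbT.
  - exact/measurable_EFinP.
  - by move=> x _; rewrite lee_fin; exact: (ln_ineq (G x) (G0 x)).2.
have Hab : 1 + b <= a + \int[eta]_x (Ginv x)%:E.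
  have E1 : \int[eta]_x ((Ginv x * G x)%:E + (Num.max (- ln (G x)) 0)%:E) = 1 + b.
    rewrite ge0_integralD // ?I2 //.
    - by move=> x _; rewrite lee_fin mulr_ge0.
    - by apply/measurable_EFinP; exact: measurable_funM.
    - by move=> x _; rewrite lee_fin le_max lexx orbT.
  have E2 : \int[eta]_x ((Num.max (ln (G x)) 0)%:E + (Ginv x)%:E) = a + \int[eta]_x (Ginv x)%:E.
    rewrite ge0_integralD //.
    - by move=> x _; rewrite lee_fin le_max lexx orbT.
    - by move=> x _; rewrite lee_fin.
    - exact/measurable_EFinP.
  rewrite -E1 -E2.
  apply: ge0_le_integral => //.
  - by move=> x _; rewrite adde_ge0 // lee_fin ?mulr_ge0 // le_max lexx orbT.
  - apply: emeasurable_funD => //.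
    by apply/measurable_EFinP; exact: measurable_funM.
  - by apply: emeasurable_funD => //; exact/measurable_EFinP.
  - by move=> x _; rewrite -!EFinD lee_fin; exact: (ln_ineq (G x) (G0 x)).1.
have bfin : b \is a fin_num.
  by rewrite ge0_fin_numE // (le_lt_trans Hb) // (le_lt_trans I1) // ltey.
rewrite sube_ge0; last by rewrite bfin.
have := le_trans Hab (leeD2l a I1).
by rewrite addeC leeD2rE.
Qed.

Lemma KL_self eta : KL eta eta = 0.
Proof.
rewrite /KL; case: pselect => [ee|h]; last first.
  by exfalso; apply: h => A; exact.
set fC := Radon_Nikodym _ _.
have fint : eta.-integrable setT fC by exact: Radon_Nikodym_integrable.
have mfC : measurable_fun setT fC by exact: measurable_int fint.
have ae1 : ae_eq eta setT fC (cst 1).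
  apply: integral_ae_eq => //.
  move=> E _ mE; rewrite integral_cst // mul1e.
  by rewrite -Radon_Nikodym_integral.
rewrite (ae_eq_integral (fun=> 0)) //; first exact: integral0.
- apply/measurable_EFinP; apply: measurableT_comp; first exact: measurable_ln.
  by apply: measurableT_comp => //; exact: fine_measurable.
- apply: filterS ae1 => x h /h ->.
  by rewrite /= ln1.
Qed.

Lemma abs_integrable (eps B : R) eta : (0 < eps)%R -> inL eps B eta ->
  eta.-integrable setT (fun y : R => y%:E).
Proof.
move=> e0 hL; apply/integrableP; split; first exact/measurable_EFinP.
have mp : measurable_fun setT (fun x : R => (`|x| `^ (1 + eps))%R).
  by apply: (measurableT_comp (measurable_powR _)); exact: normr_measurable.
apply: (@le_lt_trans _ _ (\int[eta]_x (cst 1 x + ((`|x| `^ (1 + eps))%R)%:E)%E)%E).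
  apply: ge0_le_integral => //.
  - apply: measurableT_comp => //; exact: normr_measurable.
  - by apply: emeasurable_funD => //; exact/measurable_EFinP.
  move=> x _; rewrite /= -EFinD lee_fin.
  have [x1|x1] := leP (`|x|)%R 1%R.
    by rewrite (le_trans x1) // lerDl powR_ge0.
  rewrite (le_trans (le1r_powR (ltW x1) (_ : 1 <= 1 + eps)%R)) ?lerDr ?ltW //.
  by rewrite ltrDl.
rewrite ge0_integralD //; last exact/measurable_EFinP.
rewrite integral_cst // mul1e.
rewrite (le_lt_trans (leeD2r _ (probability_le1 _ _))) //.
rewrite (le_lt_trans (leeD2l _ hL)) //.
by rewrite -EFinD ltey.
Qed.

Lemma cvar_fin (pi eps B : R) eta : (0 < eps)%R -> inL eps B eta ->
  cvar pi eta \is a fin_num.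
Proof.
move=> e0 hL; rewrite /cvar fin_numD; apply/andP; split => //.
rewrite fin_numM //; apply: integrable_fin_num => //.
apply: (integrableS measurableT) => //; exact: (@abs_integrable eps B eta e0 hL).
Qed.

Lemma inf_sum_le (m : \bar R) (s u : R) (A Bs : set (\bar R)) :
  (0 < s)%R -> (0 < u)%R ->
  (forall a, A a -> 0 <= a) -> (forall b, Bs b -> 0 <= b) ->
  (forall a b, A a -> Bs b -> m <= s%:E * a + u%:E * b) ->
  m <= s%:E * ereal_inf A + u%:E * ereal_inf Bs.
Proof.
move=> s0 u0 A0 B0 H.
have iA0 : 0 <= ereal_inf A by apply/ereal_infP.
have iB0 : 0 <= ereal_inf Bs by apply/ereal_infP.
have [iAy|iAy] := eqVneq (ereal_inf A) +oo.
  rewrite iAy mulry gtr0_sg // mul1e addye ?leey //.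
  by rewrite gt_eqF // (lt_le_trans _ (mule_ge0 _ iB0)) ?ltNy0 // lee_fin ltW.
have [iBy|iBy] := eqVneq (ereal_inf Bs) +oo.
  rewrite iBy mulry gtr0_sg // mul1e addey ?leey //.
  by rewrite gt_eqF // (lt_le_trans _ (mule_ge0 _ iA0)) ?ltNy0 // lee_fin ltW.
have fA : ereal_inf A \is a fin_num by rewrite ge0_fin_numE // ltey.
have fB : ereal_inf Bs \is a fin_num by rewrite ge0_fin_numE // ltey.
apply/lee_addgt0Pr => e e0.
have es : (0 < e / (2 * s))%R by rewrite divr_gt0 // mulr_gt0.
have eu : (0 < e / (2 * u))%R by rewrite divr_gt0 // mulr_gt0.
have [a Aa ha] := lb_ereal_inf_adherent es fA.
have [b Bb hb] := lb_ereal_inf_adherent eu fB.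
apply: (le_trans (H a b Aa Bb)).
have fa : a \is a fin_num.
  by rewrite ge0_fin_numE ?A0 // (lt_trans ha) // -(fineK fA) -EFinD ltey.
have fb : b \is a fin_num.
  by rewrite ge0_fin_numE ?B0 // (lt_trans hb) // -(fineK fB) -EFinD ltey.
move: ha hb; rewrite -(fineK fA) -(fineK fB) -(fineK fa) -(fineK fb).
set rA := fine (ereal_inf A); set rB := fine (ereal_inf Bs).
set ra := fine a; set rb := fine b.
rewrite -!EFinD !lte_fin lee_fin => ha hb.
have h1 : (s * ra <= s * rA + e / 2)%R.
  have h : (s * ra <= s * (rA + e / (2 * s)))%R by rewrite ler_pM2l // ltW.
  apply: (le_trans h); rewrite mulrDr; apply: lerD => //.
  by rewrite le_eqVlt; apply/orP; left; apply/eqP; field; rewrite gt_eqF.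
have h2 : (u * rb <= u * rB + e / 2)%R.
  have h : (u * rb <= u * (rB + e / (2 * u)))%R by rewrite ler_pM2l // ltW.
  apply: (le_trans h); rewrite mulrDr; apply: lerD => //.
  by rewrite le_eqVlt; apply/orP; left; apply/eqP; field; rewrite gt_eqF.
lra.
Qed.

Lemma main_eq (pi eps B : R) (n : nat) (mu : 'I_n.+2 -> probability R R)
    (t : 'I_n.+2 -> R) :
  (0 < eps)%R -> inA pi eps B ord0 mu -> simplex t ->
  lhs_val pi eps B mu t = rhs_val pi eps B mu t.
Proof.
move=> e0 [hM hlt] [t0 _].
pose S (nu : 'I_n.+2 -> probability R R) :=
  \sum_(a < n.+2) (t a)%:E * KL (mu a) (nu a).
pose nu2 (j : 'I_n.+2) (k0 kj : probability R R) :=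
  fun a => if a == ord0 then k0 else if a == j then kj else mu a.
have S2 j k0 kj : j != ord0 ->
    S (nu2 j k0 kj) = (t ord0)%:E * KL (mu ord0) k0 + (t j)%:E * KL (mu j) kj.
  move=> j0; rewrite /S (bigD1 ord0) //= (bigD1 j) //=.
  rewrite /nu2 eqxx (negbTE j0) eqxx big1 ?adde0 // => a /andP[a0 aj].
  by rewrite (negbTE a0) (negbTE aj) KL_self mule0.
have nu2M j k0 kj : inL eps B k0 -> inL eps B kj -> inM eps B (nu2 j k0 kj).
  by move=> h0 hj a; rewrite /nu2; case: ifP => _ //; case: ifP => _ //.
have nu2nA j k0 kj : j != ord0 -> cvar pi kj <= cvar pi k0 ->
    ~ inA pi eps B ord0 (nu2 j k0 kj).
  move=> j0 h [_ /(_ j j0)].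
  by rewrite /nu2 eqxx (negbTE j0) eqxx ltNge h.
have Slhs j k0 kj : j != ord0 -> inL eps B k0 -> inL eps B kj ->
    cvar pi kj <= cvar pi k0 -> lhs_val pi eps B mu t <= S (nu2 j k0 kj).
  move=> j0 h0 hj hc; apply: ereal_inf_lbound; exists (nu2 j k0 kj) => //.
  by split; [exact: nu2M | exact: nu2nA].
have KU0 y : 0 <= KLinfU pi eps B (mu ord0) y.
  by apply/ereal_infP => _ [k _ <-]; exact: KL_ge0.
have KL0 j x : 0 <= KLinfL pi eps B (mu j) x.
  by apply/ereal_infP => _ [k _ <-]; exact: KL_ge0.
apply/eqP; rewrite eq_le; apply/andP; split.
- rewrite /rhs_val; apply: le_bigmin; first exact: leey.
  move=> j j0; apply/ereal_infP => _ [[x y] /= xy <-].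
  have t0' := t0 ord0; have tj' := t0 j.
  have rhs0 : 0 <= (t ord0)%:E * KLinfU pi eps B (mu ord0) y +
                   (t j)%:E * KLinfL pi eps B (mu j) x.
    by rewrite adde_ge0 // mule_ge0 // lee_fin.
  have [t00|t0n] := eqVneq (t ord0) 0%R.
    apply: (le_trans (Slhs j (mu j) (mu j) j0 (hM j) (hM j) (lexx _))).
    apply: le_trans rhs0.
    by rewrite S2 // KL_self mule0 adde0 t00 mul0e.
  have [tj0|tjn] := eqVneq (t j) 0%R.
    apply: (le_trans (Slhs j (mu ord0) (mu ord0) j0 (hM _) (hM _) (lexx _))).
    apply: le_trans rhs0.
    by rewrite S2 // KL_self mule0 add0e tj0 mul0e.
  apply: inf_sum_le.
  - by rewrite lt_def t0n t0'.
  - by rewrite lt_def tjn tj'.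
  - by move=> _ [k _ <-]; exact: KL_ge0.
  - by move=> _ [k _ <-]; exact: KL_ge0.
  - move=> _ _ [k0 [hk0 yk0] <-] [kj [hkj kjx] <-].
    rewrite -S2 //; apply: Slhs => //.
    by rewrite (le_trans kjx) // (le_trans _ yk0) // lee_fin.
- apply/ereal_infP => _ [nu [hMnu hnA] <-].
  have : exists j, ~ (j != ord0 -> cvar pi (nu ord0) < cvar pi (nu j)).
    by apply/existsNP => h; apply: hnA; split.
  move=> [j /not_implyP [j0 /negP]]; rewrite -leNgt => hj.
  have f0 := @cvar_fin pi eps B _ e0 (hMnu ord0).
  have fj := @cvar_fin pi eps B _ e0 (hMnu j).
  rewrite /rhs_val; apply: le_trans; first by apply: bigmin_le_cond; exact: j0.
  apply: le_trans.
    apply: ereal_inf_lbound.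
    exists (fine (cvar pi (nu j)), fine (cvar pi (nu ord0))) => /=; last reflexivity.
    exact: fine_le.
  rewrite /= (bigD1 ord0) //= (bigD1 j) //= addeA.
  apply: (@le_trans _ _ ((t ord0)%:E * KL (mu ord0) (nu ord0) +
                         (t j)%:E * KL (mu j) (nu j))).
    apply: leeD; apply: lee_wpmul2l; rewrite ?lee_fin //;
      apply: ereal_inf_lbound.
    + by exists (nu ord0) => //; split; [exact: hMnu | rewrite fineK].
    + by exists (nu j) => //; split; [exact: hMnu | rewrite fineK].
  apply: leeDl; apply: sume_ge0 => a _; apply: mule_ge0; [rewrite lee_fin // | exact: KL_ge0].
Qed.
End S.


(* K = n.+2 (i.e. K >= 2); arm 1 of the paper is ord0. *)
Theorem lemma2 (R : realType) (pi eps B : R) (n : nat)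
    (mu : 'I_n.+2 -> probability R R) :
  0 < pi < 1 -> 0 < eps -> 0 < B ->
  inA pi eps B ord0 mu ->
  (forall t : 'I_n.+2 -> R, simplex t ->
     lhs_val pi eps B mu t = rhs_val pi eps B mu t) /\
  ereal_sup [set lhs_val pi eps B mu t | t in [set t | simplex t]] =
  ereal_sup [set rhs_val pi eps B mu t | t in [set t | simplex t]].
Proof.
move=> _ e0 _ hA.
have H t : simplex t -> lhs_val pi eps B mu t = rhs_val pi eps B mu t.
  by move=> ht; apply: main_eq.
split => //; congr ereal_sup; apply/seteqP; split => _ [t ht <-];
  by exists t => //; rewrite H.
Qed.
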